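(* For every integer $k\ge1$ and every $n\ge2k$, the element $\Lambda_{\{1,2k\}}$ commutes in $U_q(\mathfrak{sl}_2)^{\otimes n}$ with $\Lambda_{\{1,2,4,\dots,2k\}}$ and with $\Lambda_{\{1,3,5,\dots,2k-1,2k\}}$.
   Context: Let $\mathbb{K}$ be a field and $q\in\mathbb{K}$ not a root of unity. $U_q(\mathfrak{sl}_2)$ is the associative $\mathbb{K}$-algebra with generators $E,F,K,K^{-1}$ and relations $KK^{-1}=K^{-1}K=1$, $KE=q^2EK$, $KF=q^{-2}FK$, $EF-FE=\frac{K-K^{-1}}{q-q^{-1}}$, with Casimir element $\Lambda=(q-q^{-1})^2EF+q^{-1}K+qK^{-1}$ and coproduct $\Delta(E)=E\otimes1+K\otimes E$, $\Delta(F)=F\otimes K^{-1}+1\otimes F$, $\Delta(K^{\pm1})=K^{\pm1}\otimes K^{\pm1}$. $\mathcal{I}_R$ is the subalgebra generated by $EK^{-1},F,K^{-1},\Lambda$, with algebra morphism $\tau_R:\mathcal{I}_R\to U_q(\mathfrak{sl}_2)\otimes\mathcal{I}_R$: $\tau_R(EK^{-1})=K^{-1}\otimes EK^{-1}$, $\tau_R(F)=K\otimes F-q^{-3}(q-q^{-1})^2F^2K\otimes EK^{-1}+q^{-1}(q+q^{-1})FK\otimes K^{-1}-q^{-1}FK\otimes\Lambda$, $\tau_R(K^{-1})=1\otimes K^{-1}-q^{-1}(q-q^{-1})^2F\otimes EK^{-1}$, $\tau_R(\Lambda)=1\otimes\Lambda$. $1^{\otimes\ell}\otimes\varphi\otimes1^{\otimes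 m}$ applies $\varphi$ to tensor position $\ell+1$. For $A=\{a_1<\dots<a_m\}\subseteq\{1,\dots,n\}$, $\Lambda_A=1^{\otimes(a_1-1)}\otimes(\mu_m\circ\cdots\circ\mu_2)(\Lambda)\otimes1^{\otimes(n-a_m)}$ with $\mu_i=(1^{\otimes(a_i-a_1-1)}\otimes\tau_R)\circ\cdots\circ(1^{\otimes(a_{i-1}-a_1+1)}\otimes\tau_R)\circ(1^{\otimes(a_{i-1}-a_1)}\otimes\Delta)$ (no $\tau_R$ factors when $a_i=a_{i-1}+1$). *)

(* Defs.v *)
(* Encoding of U_q(sl_2)^{\otimes n} by its universal property:
   an algebra generated by n mutually commuting copies of U_q(sl_2). *)
From HB Require Import structures.
From mathcomp Require Import all_boot all_algebra.
Set Implicit Arguments. Unset Strict Implicit. Unset Printing Implicit Defensive.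
Import GRing.Theory.
Local Open Scope ring_scope.

Inductive Ugen := GE | GF | GK | GKi.

(** [g i x] is the generator [x] placed in tensor position [i] (1-based),
    i.e. 1^{(i-1)} (x) x (x) 1^{(n-i)}.  [Uq_tensor_rep] says that these
    satisfy the defining relations of U_q(sl_2) in each position and that
    generators in different positions commute. *)
Definition Uq_tensor_rep (KK : fieldType) (A : algType KK) (q : KK) (n : nat)
    (g : nat -> Ugen -> A) : Prop :=
  (forall i, (1 <= i <= n)%N ->
     [/\ g i GK * g i GKi = 1, g i GKi * g i GK = 1,
         g i GK * g i GE = q ^+ 2 *: (g i GE * g i GK),
         g i GK * g i GF = q ^- 2 *: (g i GF * g i GK)
       & g i GE * g i GF - g i GF * g i GE = (q - q^-1)^-1 *: (g i GK - g i GKi)])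
  /\ (forall i j x y, (1 <= i <= n)%N -> (1 <= j <= n)%N -> i != j ->
        g i x * g j y = g j y * g i x).

(** Values of the four generators EK^{-1}, F, K^{-1}, Lambda of I_R. *)
Record IRval (A : Type) := IRv { vEK : A; vF : A; vKi : A; vL : A }.

Definition casimir (KK : fieldType) (A : algType KK) (q : KK) (x : Ugen -> A) : A :=
  (q - q^-1) ^+ 2 *: (x GE * x GF) + q^-1 *: x GK + q *: x GKi.

Definition ir_embed (KK : fieldType) (A : algType KK) (q : KK) (x : Ugen -> A) :
    IRval A :=
  IRv (x GE * x GKi) (x GF) (x GKi) (casimir q x).

(** Coproduct applied at a position p whose generators are [x]; [r] gives
    the images (under all later maps) of the generators of I_R placed at
    position p+1.  Delta maps I_R into U (x) I_R:
      Delta(EK^-1) = EK^-1 (x) K^-1 + 1 (x) EK^-1,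
      Delta(F)     = F (x) K^-1 + 1 (x) F,
      Delta(K^-1)  = K^-1 (x) K^-1,
      Delta(Lambda)= (q-q^-1)^2 (EF (x) K^-1 + E (x) F + KF (x) EK^-1)
                     + K (x) (Lambda - q K^-1) + q K^-1 (x) K^-1. *)
Definition ir_coprod (KK : fieldType) (A : algType KK) (q : KK) (x : Ugen -> A)
    (r : IRval A) : IRval A :=
  IRv (x GE * x GKi * vKi r + vEK r)
      (x GF * vKi r + vF r)
      (x GKi * vKi r)
      ((q - q^-1) ^+ 2 *: (x GE * x GF * vKi r + x GE * vF r + x GK * x GF * vEK r)
        + x GK * (vL r - q *: vKi r) + q *: (x GKi * vKi r)).

Definition ir_tau (KK : fieldType) (A : algType KK) (q : KK) (x : Ugen -> A)
    (r : IRval A) : IRval A :=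
  IRv (x GKi * vEK r)
      (x GK * vF r
        - (q ^- 3 * (q - q^-1) ^+ 2) *: (x GF * x GF * x GK * vEK r)
        + (q^-1 * (q + q^-1)) *: (x GF * x GK * vKi r)
        - q^-1 *: (x GF * x GK * vL r))
      (vKi r - (q^-1 * (q - q^-1) ^+ 2) *: (x GF * vEK r))
      (vL r).

(** [ir_push q g S hi d]: images of the generators of I_R sitting at position
    p = hi - d under all subsequent maps of the construction of Lambda_S
    (positions p+1, ..., hi); at position p the map applied is Delta if
    p \in S and tau_R otherwise. *)
Fixpoint ir_push (KK : fieldType) (A : algType KK) (q : KK) (g : nat -> Ugen -> A)
    (S : seq nat) (hi d : nat) : IRval A :=
  match d with
  | 0 => ir_embed q (g hi)
  | d'.+1 =>
      let p := (hi - d)%N in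
      let r := ir_push q g S hi d' in
      if p \in S then ir_coprod q (g p) r else ir_tau q (g p) r
  end.

(** Lambda_S for S = [:: a_1; ...; a_m] sorted increasingly (1-based). *)
Definition LambdaA (KK : fieldType) (A : algType KK) (q : KK) (g : nat -> Ugen -> A)
    (S : seq nat) : A :=
  vL (ir_push q g S (last 0%N S) (last 0%N S - head 0%N S)).

Definition set_1_2k (k : nat) : seq nat := [:: 1%N; (2 * k)%N].
Definition set_even (k : nat) : seq nat := 1%N :: [seq (2 * i)%N | i <- iota 1 k].
Definition set_odd (k : nat) : seq nat :=
  [seq (2 * i + 1)%N | i <- iota 0 k] ++ [:: (2 * k)%N].

(* Main.v *)
Require Import Defs.
From HB Require Import structures.
From mathcomp Require Import all_boot all_algebra.
From mathcomp Require Import ring.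
Import GRing.Theory.
Local Open Scope ring_scope.

Definition term := (int * int * seq nat)%type.
Definition poly := seq term.
Definition rule := (nat * nat * poly)%type.

Definition tmul (t1 t2 : term) : term :=
  (intRing.mulz t1.1.1 t2.1.1, intZmod.addz t1.1.2 t2.1.2, t1.2 ++ t2.2).
Definition pmul (p1 p2 : poly) : poly :=
  flatten [seq [seq tmul t1 t2 | t2 <- p2] | t1 <- p1].
Definition pneg (p : poly) : poly := [seq (intZmod.oppz t.1.1, t.1.2, t.2) | t <- p].
Fixpoint find_rule (R : seq rule) (a b : nat) : option poly :=
  match R with
  | [::] => None
  | r :: R' => if (r.1.1 == a) && (r.1.2 == b) then Some r.2 else find_rule R' a b
  end.
Fixpoint split_word (R : seq rule) (w : seq nat) : option (seq nat * poly * seq nat) :=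
  match w with
  | a :: ((b :: s) as w') =>
      match find_rule R a b with
      | Some rhs => Some ([::], rhs, s)
      | None => match split_word R w' with
                | Some (pre, rhs, suf) => Some (a :: pre, rhs, suf)
                | None => None end
      end
  | _ => None
  end.
Fixpoint insert (t : term) (out : poly) : poly :=
  match out with
  | [::] => [:: t]
  | t' :: o => if (t'.1.2 == t.1.2) && (t'.2 == t.2)
               then (intZmod.addz t'.1.1 t.1.1, t'.1.2, t'.2) :: o
               else t' :: insert t o
  end.
Definition step1 (R : seq rule) (st : poly * poly) : poly * poly :=
  match st with
  | ([::], out) => ([::], out)
  | (t :: todo, out) =>
      match split_word R t.2 with
      | Some (pre, rhs, suf) =>
          ([seq tmul (tmul (t.1.1, t.1.2, pre) t') (Posz 1, Posz 0, suf) | t' <- rhs] ++ todo, out)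
      | None => (todo, insert t out)
      end
  end.
Fixpoint nfd (R : seq rule) (k : nat) (st : poly * poly) : poly * poly :=
  match k with
  | 0 => step1 R st
  | k'.+1 => nfd R k' (nfd R k' st)
  end.
Definition iszero (p : poly) : bool := all (fun t => t.1.1 == Posz 0) p.
Definition done (st : poly * poly) : bool := (st.1 == [::]) && iszero st.2.
Definition substw (s : nat -> poly) (w : seq nat) : poly :=
  foldr (fun a acc => pmul (s a) acc) [:: (Posz 1, Posz 0, [::])] w.
Definition subst (s : nat -> poly) (p : poly) : poly :=
  flatten [seq pmul [:: (t.1.1, t.1.2, [::])] (substw s t.2) | t <- p].
Definition rule_poly (r : rule) : poly := (Posz 1, Posz 0, [:: r.1.1; r.1.2]) :: pneg r.2.
Definition check (R : seq rule) (s : nat -> poly) (Rl : seq rule) (k : nat) : bool :=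
  all (fun r => done (nfd R k (subst s (rule_poly r), [::]))) Rl.
Definition Urules : seq rule :=
  [:: (1, 0, [:: (Posz 1, Posz 0, [:: 0; 1]); (Posz 1, Negz 0, [:: 2]); (Negz 0, Posz 1, [:: 2]); (Negz 0, Negz 0, [:: 3]); (Posz 1, Posz 1, [:: 3])]);
  (2, 0, [:: (Posz 1, Posz 2, [:: 0; 2])]);
  (2, 1, [:: (Posz 1, Negz 1, [:: 1; 2])]);
  (2, 3, [:: (Posz 1, Posz 0, [:: ])]);
  (3, 0, [:: (Posz 1, Negz 1, [:: 0; 3])]);
  (3, 1, [:: (Posz 1, Posz 2, [:: 1; 3])]);
  (3, 2, [:: (Posz 1, Posz 0, [:: ])])].

Definition cpairs : seq (nat * nat) := [seq (j, i) | j <- iota 4 8, i <- iota 0 4].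
Definition Crules : seq rule :=
  [seq (pr.1, pr.2, [:: (Posz 1, Posz 0, [:: pr.2; pr.1])]) | pr <- cpairs].

Definition Rel : seq rule :=
  [:: (4, 5, [:: (Negz 0, Posz 1, [:: ]); (Negz 0, Posz 3, [:: 6; 6]); (Posz 1, Posz 2, [:: 6; 7])]);
  (5, 4, [:: (Negz 0, Posz 1, [:: ]); (Negz 0, Negz 0, [:: 6; 6]); (Posz 1, Posz 0, [:: 6; 7])]);
  (6, 4, [:: (Posz 1, Negz 1, [:: 4; 6])]);
  (6, 5, [:: (Posz 1, Posz 2, [:: 5; 6])]);
  (7, 4, [:: (Posz 1, Posz 0, [:: 4; 7])]);
  (7, 5, [:: (Posz 1, Posz 0, [:: 5; 7])]);
  (7, 6, [:: (Posz 1, Posz 0, [:: 6; 7])]);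
  (8, 4, [:: (Posz 1, Posz 0, [:: 4; 8])]);
  (8, 5, [:: (Posz 1, Posz 0, [:: 5; 8]); (Posz 1, Negz 0, [:: 6; 10]); (Negz 0, Posz 3, [:: 6; 10]); (Negz 0, Posz 0, [:: 7; 10]); (Posz 1, Posz 2, [:: 7; 10])]);
  (8, 6, [:: (Negz 0, Negz 1, [:: 4; 10]); (Posz 1, Posz 0, [:: 4; 10]); (Posz 1, Posz 0, [:: 6; 8])]);
  (8, 7, [:: (Posz 1, Posz 0, [:: 7; 8])]);
  (8, 9, [:: (Negz 0, Posz 1, [:: ]); (Negz 0, Posz 3, [:: 10; 10]); (Posz 1, Posz 2, [:: 10; 11])]);
  (9, 4, [:: (Posz 1, Posz 0, [:: 4; 9]); (Negz 0, Negz 0, [:: 6; 10]); (Posz 1, Posz 3, [:: 6; 10]); (Posz 1, Posz 0, [:: 7; 10]); (Negz 0, Posz 2, [:: 7; 10])]);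
  (9, 5, [:: (Posz 1, Posz 0, [:: 5; 9])]);
  (9, 6, [:: (Posz 1, Posz 0, [:: 5; 10]); (Negz 0, Posz 2, [:: 5; 10]); (Posz 1, Posz 0, [:: 6; 9])]);
  (9, 7, [:: (Posz 1, Posz 0, [:: 7; 9])]);
  (9, 8, [:: (Negz 0, Posz 1, [:: ]); (Negz 0, Negz 0, [:: 10; 10]); (Posz 1, Posz 0, [:: 10; 11])]);
  (10, 4, [:: (Posz 1, Negz 1, [:: 4; 10])]);
  (10, 5, [:: (Posz 1, Posz 2, [:: 5; 10])]);
  (10, 6, [:: (Posz 1, Posz 0, [:: 6; 10])]);
  (10, 7, [:: (Posz 1, Posz 0, [:: 7; 10])]);
  (10, 8, [:: (Posz 1, Negz 1, [:: 8; 10])]);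
  (10, 9, [:: (Posz 1, Posz 2, [:: 9; 10])]);
  (11, 4, [:: (Posz 1, Negz 2, [:: 4; 10]); (Negz 0, Posz 1, [:: 4; 10]); (Posz 1, Posz 2, [:: 4; 11]); (Negz 0, Negz 0, [:: 6; 8]); (Posz 1, Posz 3, [:: 6; 8]); (Posz 1, Posz 0, [:: 7; 8]); (Negz 0, Posz 2, [:: 7; 8])]);
  (11, 5, [:: (Negz 0, Negz 0, [:: 5; 10]); (Posz 1, Posz 3, [:: 5; 10]); (Posz 1, Negz 1, [:: 5; 11]); (Posz 1, Negz 2, [:: 6; 9]); (Negz 0, Posz 1, [:: 6; 9]); (Negz 0, Negz 1, [:: 7; 9]); (Posz 1, Posz 0, [:: 7; 9])]);
  (11, 6, [:: (Negz 0, Negz 1, [:: 4; 9]); (Posz 1, Posz 0, [:: 4; 9]); (Posz 1, Negz 1, [:: 5; 8]); (Negz 0, Posz 0, [:: 5; 8]); (Posz 1, Negz 2, [:: 6; 10]); (Negz 0, Negz 0, [:: 6; 10]); (Negz 0, Posz 1, [:: 6; 10]); (Posz 1, Posz 3, [:: 6; 10]); (Posz 1, Posz 0, [:: 6; 11]); (Negz 0, Negz 1, [:: 7; 10]); (Posz 2, Posz 0, [:: 7; 10]); (Negz 0, Posz 2, [:: 7; 10])]);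
  (11, 7, [:: (Posz 1, Posz 0, [:: 7; 11])]);
  (11, 8, [:: (Posz 1, Posz 0, [:: 8; 11])]);
  (11, 9, [:: (Posz 1, Posz 0, [:: 9; 11])]);
  (11, 10, [:: (Posz 1, Posz 0, [:: 10; 11])])].

Definition P (l : seq term) : poly := l.
Definition Tpoly (o : nat) : seq poly :=
  [:: [:: (Posz 1, Posz 0, [:: 3; o])];
      [:: (Posz 1, Posz 0, [:: 2; o.+1]); (Negz 0, Negz 2, [:: 1; 1; 2; o]);
          (Posz 1, Posz 0, [:: 1; 2; o.+2]); (Posz 1, Negz 1, [:: 1; 2; o.+2]);
          (Negz 0, Negz 0, [:: 1; 2; o.+3])];
      [:: (Posz 1, Posz 0, [:: o.+2]); (Negz 0, Negz 0, [:: 1; o])];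
      [:: (Posz 1, Posz 0, [:: o.+3])]].
Definition Dpoly (o : nat) : seq poly :=
  [:: [:: (Posz 1, Posz 0, [:: 0; 3; o.+2]); (Posz 1, Posz 0, [:: o])];
      [:: (Posz 1, Posz 0, [:: 1; o.+2]); (Posz 1, Posz 0, [:: o.+1])];
      [:: (Posz 1, Posz 0, [:: 3; o.+2])];
      [:: (Posz 1, Posz 0, [:: 0; 1; o.+2]); (Posz 1, Posz 0, [:: 0; o.+1]);
          (Posz 1, Posz 0, [:: 2; 1; o]); (Posz 1, Posz 0, [:: 2; o.+3]);
          (Negz 0, Posz 1, [:: 2; o.+2]); (Posz 1, Posz 1, [:: 3; o.+2])]].
Definition Epoly : seq poly :=
  [:: [:: (Posz 1, Posz 0, [:: 0; 3])]; [:: (Posz 1, Posz 0, [:: 1])];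
      [:: (Posz 1, Posz 0, [:: 3])];
      [:: (Posz 1, Posz 0, [:: 0; 1]); (Posz 1, Negz 0, [:: 2]); (Posz 1, Posz 1, [:: 3])]].
Definition atomp (i : nat) : poly := [:: (Posz 1, Posz 0, [:: i])].
Definition sTT (i : nat) : poly :=
  if (i < 4)%N then atomp i else if (i < 8)%N then nth [::] (Tpoly 4) (i - 4)%N
  else if (i < 12)%N then nth [::] (Tpoly 8) (i - 8)%N else atomp i.
Definition sTD (i : nat) : poly :=
  if (i < 4)%N then atomp i else if (i < 8)%N then nth [::] (Tpoly 4) (i - 4)%N
  else if (i < 12)%N then nth [::] (Dpoly 8) (i - 8)%N else atomp i.
Definition sB (i : nat) : poly :=
  if (i < 4)%N then atomp i else if (i < 8)%N then nth [::] Epoly (i - 4)%N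
  else if (i < 12)%N then nth [::] Epoly (i - 8)%N else atomp i.
Definition FULL := Urules ++ Crules ++ Rel.
Definition finp : poly := pmul (nth [::] (Dpoly 4) 3) (nth [::] (Dpoly 8) 3) ++ pneg (pmul (nth [::] (Dpoly 8) 3) (nth [::] (Dpoly 4) 3)).

Section Sem.
Variables (KK : fieldType) (A : algType KK) (q : KK).
Hypothesis q0 : q != 0.

Definition wval (env : nat -> A) (w : seq nat) : A := foldr (fun a acc => env a * acc) 1 w.
Definition cval (c e : int) : KK := c%:~R * q ^ e.
Definition tval env (t : term) : A := cval t.1.1 t.1.2 *: wval env t.2.
Definition pval env (p : poly) : A := foldr (fun t acc => tval env t + acc) 0 p.
Fixpoint holds env (R : seq rule) : Prop :=
  match R with
  | [::] => True
  | r :: R' => env r.1.1 * env r.1.2 = pval env r.2 /\ holds env R'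
  end.

Lemma wval_cat env w1 w2 : wval env (w1 ++ w2) = wval env w1 * wval env w2.
Proof. by elim: w1 => [|a w IH] /=; rewrite ?mul1r ?IH ?mulrA. Qed.
Lemma pval_cat env p1 p2 : pval env (p1 ++ p2) = pval env p1 + pval env p2.
Proof. by elim: p1 => [|t p IH] /=; rewrite ?add0r ?IH ?addrA. Qed.
Lemma cval_mul c1 e1 c2 e2 :
  cval (intRing.mulz c1 c2) (intZmod.addz e1 e2) = cval c1 e1 * cval c2 e2.
Proof.
rewrite /cval.
have->: intRing.mulz c1 c2 = c1 * c2 by [].
have->: intZmod.addz e1 e2 = e1 + e2 by [].
by rewrite intrM expfzDr // mulrACA.
Qed.
Lemma cval10 : cval (Posz 1) (Posz 0) = 1.
Proof. by rewrite /cval expr0z mulr1. Qed.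
Lemma tval_mul env t1 t2 : tval env (tmul t1 t2) = tval env t1 * tval env t2.
Proof.
rewrite /tval /tmul /= cval_mul wval_cat.
by rewrite -scalerAl -scalerAr scalerA.
Qed.
Lemma pval_map_mul env t p :
  pval env [seq tmul t t2 | t2 <- p] = tval env t * pval env p.
Proof. by elim: p => [|t2 p IH] /=; rewrite ?mulr0 // tval_mul IH mulrDr. Qed.
Lemma pval_pmul env p1 p2 : pval env (pmul p1 p2) = pval env p1 * pval env p2.
Proof.
elim: p1 => [|t p IH] /=; first by rewrite mul0r.
by rewrite pval_cat pval_map_mul IH mulrDl.
Qed.
Lemma pval_pneg env p : pval env (pneg p) = - pval env p.
Proof.
elim: p => [|t p IH] /=; first by rewrite oppr0.
rewrite IH opprD; congr (_ + _).
rewrite /tval /cval /=.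
have->: intZmod.oppz t.1.1 = - t.1.1 by [].
by rewrite intrN mulNr scaleNr.
Qed.

Lemma find_rule_sound env R a b rhs :
  holds env R -> find_rule R a b = Some rhs -> env a * env b = pval env rhs.
Proof.
elim: R => [|[[a' b'] r] R IH] //= [H1 H2].
case: ifP => [/andP [/eqP Ea /eqP Eb] [<-]|_]; last exact: IH.
by rewrite -Ea -Eb.
Qed.

Arguments find_rule_sound {env R a b rhs}.
Lemma split_word_sound env R w pre rhs suf :
  holds env R -> split_word R w = Some (pre, rhs, suf) ->
  wval env w = wval env pre * pval env rhs * wval env suf.
Proof.
move=> HR; elim: w pre => [|a w IH] pre //.
case: w IH => [|b s] IH //.
have -> : split_word R [:: a, b & s] =
  match find_rule R a b with
  | Some rhs => Some ([::], rhs, s)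
  | None => match split_word R (b :: s) with
            | Some (pre, rhs, suf) => Some (a :: pre, rhs, suf)
            | None => None end
  end by [].
case E: (find_rule R a b) => [r|].
  move=> [<- <- <-]; rewrite /= mul1r mulrA (find_rule_sound HR E) //.
case E2: (split_word R (b :: s)) => [[[pre' rhs'] suf']|] //.
move=> [<- Er Es]; subst rhs' suf'.
by rewrite -[wval env [:: a, b & s]]/(env a * wval env (b :: s)) (IH _ E2) /= !mulrA.
Qed.

Arguments split_word_sound {env R w pre rhs suf}.
Lemma insert_sound env t out : pval env (insert t out) = tval env t + pval env out.
Proof.
elim: out => [|t' o IH] //=.
case: ifP => [/andP [/eqP Ee /eqP Ew]|_] /=.
  rewrite addrA; congr (_ + _).
  rewrite /tval /cval /=.
  have->: intZmod.addz t'.1.1 t.1.1 = t'.1.1 + t.1.1 by [].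
  by rewrite intrD mulrDl scalerDl Ee Ew addrC.
by rewrite IH addrCA.
Qed.

Lemma pval_step env R st : holds env R ->
  pval env (step1 R st).1 + pval env (step1 R st).2 = pval env st.1 + pval env st.2.
Proof.
move=> HR; case: st => [[|t todo] out] //=.
case E: (split_word R t.2) => [[[pre rhs] suf]|] /=; last first.
  by rewrite insert_sound addrCA addrA.
rewrite pval_cat; congr (_ + _ + _).
have H := split_word_sound HR E.
have->: forall p, pval env [seq tmul (tmul (t.1.1, t.1.2, pre) t') (Posz 1, Posz 0, suf) | t' <- p]
   = tval env (t.1.1, t.1.2, pre) * pval env p * tval env (Posz 1, Posz 0, suf).
  elim=> [|t' p IH] /=; first by rewrite mulr0 mul0r.
  by rewrite !tval_mul IH mulrDr mulrDl.
rewrite /tval /= cval10 scale1r H -!scalerAl.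
by case: t {E H} => [[c e] w].
Qed.

Lemma pval_nfd env R k st : holds env R ->
  pval env (nfd R k st).1 + pval env (nfd R k st).2 = pval env st.1 + pval env st.2.
Proof.
move=> HR; elim: k st => [|k IH] st /=; first exact: pval_step.
by rewrite IH IH.
Qed.

Lemma done_sound env st : done st -> pval env st.1 + pval env st.2 = 0.
Proof.
case: st => p1 p2 /andP [/eqP -> /= Hz]; rewrite add0r.
elim: p2 Hz => [|t p IH] //= /andP [/eqP Ht Hp].
by rewrite IH // addr0 /tval /cval Ht mul0r scale0r.
Qed.

Lemma nf_zero env R k p : holds env R -> done (nfd R k (p, [::])) -> pval env p = 0.
Proof.
move=> HR Hd; have := pval_nfd env R k (p, [::]) HR.
by rewrite (done_sound env _ Hd) /= addr0 => <-.
Qed.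

Arguments nf_zero {env R k p}.
Lemma substw_sound env s w : pval env (substw s w) = wval (fun a => pval env (s a)) w.
Proof.
elim: w => [|a w IH] /=; first by rewrite /tval /= cval10 scale1r addr0.
by rewrite pval_pmul IH.
Qed.

Lemma subst_sound env s p : pval env (subst s p) = pval (fun a => pval env (s a)) p.
Proof.
elim: p => [|t p IH] //=.
rewrite pval_cat IH pval_pmul substw_sound; congr (_ + _).
by rewrite /= addr0 /tval /= -scalerAl mul1r.
Qed.

Lemma check_sound env R s Rl k : holds env R -> check R s Rl k ->
  holds (fun a => pval env (s a)) Rl.
Proof.
move=> HR; elim: Rl => [|r Rl IH] //= /andP [Hr HRl]; split; last exact: IH.
have := nf_zero HR Hr; rewrite subst_sound /= pval_pneg /tval /= cval10 scale1r mulr1.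
by move/eqP; rewrite subr_eq0 => /eqP.
Qed.

Lemma holds_cat env R1 R2 : holds env (R1 ++ R2) <-> holds env R1 /\ holds env R2.
Proof. elim: R1 => [|r R1 IH] /=; first by tauto. by move: IH; tauto. Qed.

Definition atomsP (p : poly) : seq nat := flatten [seq t.2 | t <- p].
Definition atomsR (R : seq rule) : seq nat :=
  flatten [seq r.1.1 :: r.1.2 :: atomsP r.2 | r <- R].

Lemma pval_ext env1 env2 p : (forall i, i \in atomsP p -> env1 i = env2 i) ->
  pval env1 p = pval env2 p.
Proof.
elim: p => [|t p IH] //= H.
rewrite IH; last by move=> i Hi; apply: H; rewrite mem_cat Hi orbT.
congr (_ + _); rewrite /tval; congr (_ *: _).
have: forall i, i \in t.2 -> env1 i = env2 i by move=> i Hi; apply: H; rewrite mem_cat Hi.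
elim: t.2 => [|a w IHw] //= Hw.
by rewrite Hw ?inE ?eqxx // IHw // => i Hi; apply: Hw; rewrite inE Hi orbT.
Qed.

Lemma holds_ext env1 env2 R : (forall i, i \in atomsR R -> env1 i = env2 i) ->
  holds env1 R -> holds env2 R.
Proof.
elim: R => [|[[a b] r] R IH] //= H [H1 H2]; split.
  rewrite -!H ?inE ?eqxx ?orbT // H1; apply: pval_ext => i Hi; apply: H.
  by rewrite !inE mem_cat Hi !orbT.
apply: IH => // i Hi; apply: H; by rewrite !inE mem_cat Hi !orbT.
Qed.

End Sem.
Arguments wval {KK A} env w.
Arguments cval {KK} q c e.
Arguments tval {KK A} q env t.
Arguments pval {KK A} q env p.
Arguments holds {KK A} q env R.

Section Concrete.
Variables (KK : fieldType) (q : KK) (A : algType KK).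
Hypothesis q0 : q != 0.
Hypothesis d0 : q - q^-1 != 0.

Definition hatq (r : IRval A) (j : nat) : A :=
  match j with 0 => (q - q^-1) *: vEK r | 1 => (q - q^-1) *: vF r | 2 => vKi r | _ => vL r end.
Definition xhat (x : Ugen -> A) (j : nat) : A :=
  match j with 0 => (q - q^-1) *: x GE | 1 => (q - q^-1) *: x GF | 2 => x GK | _ => x GKi end.

Lemma cvalE c e : cval q c e = c%:~R * q ^ e. Proof. by []. Qed.
Lemma i1 : (Posz 1)%:~R = 1 :> KK. Proof. by []. Qed.
Lemma im1 : (Negz 0)%:~R = -1 :> KK. Proof. by rewrite NegzE intrN. Qed.
Lemma qz n : q ^ (Posz n) = q ^+ n. Proof. by []. Qed.
Lemma qzn n : q ^ (Negz n) = q ^- n.+1. Proof. by []. Qed.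

Ltac scal := rewrite ?cvalE ?i1 ?im1 ?qz ?qzn ?mulr1 ?addr0 ?mul1r ?scale1r;
  repeat (rewrite -scalerAl || rewrite -scalerAr); rewrite ?scalerA ?mulrA
  ?scalerDr ?scalerBr ?scalerN ?scalerA ?mulrA.

Lemma T_bridge env o x r :
  env 0%N = xhat x 0 -> env 1%N = xhat x 1 -> env 2%N = xhat x 2 -> env 3%N = xhat x 3 ->
  env o = hatq r 0 -> env o.+1 = hatq r 1 -> env o.+2 = hatq r 2 -> env o.+3 = hatq r 3 ->
  forall j, (j < 4)%N -> pval q env (nth [::] (Tpoly o) j) = hatq (ir_tau q x r) j.
Proof.
move=> h0 h1 h2 h3 g0 g1 g2 g3 [|[|[|[|j]]]] // _;
rewrite /= /tval /wval /= ?h0 ?h1 ?h2 ?h3 ?g0 ?g1 ?g2 ?g3 /=; scal.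
- by [].
- rewrite !addrA -(addrA _ (_ *: (x GF * x GK * vKi r)) (_ *: (x GF * x GK * vKi r))) -scalerDl.
  rewrite -!scaleNr; congr (_ + _ + _ + _); congr (_ *: _); rewrite ?expr1 ?exprS ?expr0; field; done.
- by congr (_ + _); rewrite -scaleNr; congr (_ *: _); rewrite ?expr1; field; done.
- by [].
Qed.
Lemma D_bridge env o x r :
  env 0%N = xhat x 0 -> env 1%N = xhat x 1 -> env 2%N = xhat x 2 -> env 3%N = xhat x 3 ->
  env o = hatq r 0 -> env o.+1 = hatq r 1 -> env o.+2 = hatq r 2 -> env o.+3 = hatq r 3 ->
  forall j, (j < 4)%N -> pval q env (nth [::] (Dpoly o) j) = hatq (ir_coprod q x r) j.
Proof.
move=> h0 h1 h2 h3 g0 g1 g2 g3 [|[|[|[|j]]]] // _;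
rewrite /= /tval /wval /= ?h0 ?h1 ?h2 ?h3 ?g0 ?g1 ?g2 ?g3 /=; scal.
- by [].
- by [].
- by [].
- rewrite (mulrBr (x GK)) -scalerAr !addrA -!scaleNr.
  congr (_ + _ + _ + _ + _ + _); try congr (_ *: _); rewrite ?expr1 ?expr2 //; field; done.
Qed.
Lemma E_bridge env x :
  env 0%N = xhat x 0 -> env 1%N = xhat x 1 -> env 2%N = xhat x 2 -> env 3%N = xhat x 3 ->
  forall j, (j < 4)%N -> pval q env (nth [::] Epoly j) = hatq (ir_embed q x) j.
Proof.
move=> h0 h1 h2 h3 [|[|[|[|j]]]] // _;
rewrite /= /tval /wval /= ?h0 ?h1 ?h2 ?h3 /=; scal.
- by [].
- by [].
- by [].
- by rewrite /casimir addrA expr2 expr1.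
Qed.

Definition envOf (x : Ugen -> A) (r s : IRval A) (i : nat) : A :=
  if (i < 4)%N then xhat x i else if (i < 8)%N then hatq r (i - 4)
  else if (i < 12)%N then hatq s (i - 8) else 0.

Lemma qq1 : q * q - 1 != 0.
Proof.
apply: contra d0 => /eqP H; apply/eqP.
have -> : q - q^-1 = (q * q - 1) / q by field.
by rewrite H mul0r.
Qed.

Definition Urel (x : Ugen -> A) : Prop :=
  [/\ x GK * x GKi = 1, x GKi * x GK = 1,
      x GK * x GE = q ^+ 2 *: (x GE * x GK),
      x GK * x GF = q ^- 2 *: (x GF * x GK)
    & x GE * x GF - x GF * x GE = (q - q^-1)^-1 *: (x GK - x GKi)].

Lemma Urules_holds x r s : Urel x -> holds q (envOf x r s) Urules.
Proof.
case=> h1 h2 h3 h4 h5.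
have hEK : x GE * x GK = q ^- 2 *: (x GK * x GE).
  by rewrite h3 scalerA mulVf ?scale1r // expf_neq0.
have hFK : x GF * x GK = q ^+ 2 *: (x GK * x GF).
  by rewrite h4 scalerA mulfV ?scale1r // expf_neq0.
have hKiE : x GKi * x GE = q ^- 2 *: (x GE * x GKi).
  have -> : x GKi * x GE = x GKi * (x GE * x GK) * x GKi.
    by rewrite !mulrA -(mulrA _ (x GK)) h1 mulr1.
  by rewrite hEK -scalerAr -scalerAl !mulrA h2 mul1r.
have hKiF : x GKi * x GF = q ^+ 2 *: (x GF * x GKi).
  have -> : x GKi * x GF = x GKi * (x GF * x GK) * x GKi.
    by rewrite !mulrA -(mulrA _ (x GK)) h1 mulr1.
  by rewrite hFK -scalerAr -scalerAl !mulrA h2 mul1r.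
have hFE : x GF * x GE = x GE * x GF - (q - q^-1)^-1 *: (x GK - x GKi).
  by rewrite -h5 opprB addrC subrK.
rewrite /Urules /=; do ![split]; rewrite /envOf /= /tval /wval /= ?cvalE ?i1 ?im1 ?qz ?qzn ?mulr1 ?addr0 ?mul1r ?scale1r.
- rewrite -scalerAl -scalerAr scalerA hFE scalerBr scalerA.
  rewrite -[in RHS]scalerAl -[in RHS]scalerAr [in RHS]scalerA; congr (_ + _).
  rewrite scalerBr opprB addrC -scaleNr !addrA -!scalerDl -addrA -scalerDl.
  by congr (_ + _); rewrite -?scaleNr; congr (_ *: _); rewrite ?expr1; field; rewrite q0 qq1.
- by rewrite -scalerAr h3 -scalerAl !scalerA mulrC.
- by rewrite -scalerAr h4 -scalerAl !scalerA mulrC.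
- exact: h1.
- by rewrite -scalerAr hKiE -scalerAl !scalerA mulrC.
- by rewrite -scalerAr hKiF -scalerAl !scalerA mulrC.
- exact: h2.
Qed.


Lemma holds_pairs (env : nat -> A) (ps : seq (nat * nat)) :
  (forall pr, pr \in ps -> env pr.1 * env pr.2 = env pr.2 * env pr.1) ->
  holds q env [seq (pr.1, pr.2, [:: (Posz 1, Posz 0, [:: pr.2; pr.1])]) | pr <- ps].
Proof.
elim: ps => [|pr ps IH] //= H; split.
  by rewrite H ?inE ?eqxx // /tval /= cval10 scale1r mulr1 addr0.
by apply: IH => pr' Hp; apply: H; rewrite inE Hp orbT.
Qed.

Definition CommQ (y : A) (r : IRval A) : Prop :=
  [/\ GRing.comm y (vEK r), GRing.comm y (vF r), GRing.comm y (vKi r) & GRing.comm y (vL r)].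

Lemma commrZ (y z : A) (k : KK) : GRing.comm y z -> GRing.comm y (k *: z).
Proof. by move=> H; rewrite /GRing.comm -scalerAr H scalerAl. Qed.

Lemma Crules_holds x r s : (forall y, CommQ (x y) r /\ CommQ (x y) s) ->
  holds q (envOf x r s) Crules.
Proof.
move=> H; apply: holds_pairs => pr Hpr.
have Hb : all (fun pr => (4 <= pr.1 < 12)%N && (pr.2 < 4)%N) cpairs by [].
move: (allP Hb pr Hpr) => /andP [/andP [Hj1 Hj2] Hi].
case: pr Hpr Hj1 Hj2 Hi => j i /= _ Hj1 Hj2 Hi.
symmetry.
have Ei : envOf x r s i = xhat x i by rewrite /envOf Hi.
have hq : forall (t : IRval A) k, (forall y, CommQ (x y) t) -> GRing.comm (xhat x i) (hatq t k).
  move=> t k Ht.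
  have hy : forall y, GRing.comm (x y) (hatq t k).
    move=> y; case: (Ht y) => c1 c2 c3 c4.
    by case: k => [|[|[|k]]] /=; try apply: commrZ.
  case: i Hi {Ei} => [|[|[|[|i]]]] // _ /=; try exact: hy.
    by apply/commr_sym/commrZ/commr_sym.
  by apply/commr_sym/commrZ/commr_sym.
rewrite Ei /envOf; rewrite ltnNge Hj1 /=.
case: ifP => _; first by apply: hq => y; case: (H y).
by rewrite Hj2; apply: hq => y; case: (H y).
Qed.


Lemma Rel_atoms : all (fun i => (4 <= i < 12)%N) (atomsR Rel).
Proof. by vm_compute. Qed.

Lemma Rel_indep x1 x2 r s : holds q (envOf x1 r s) Rel -> holds q (envOf x2 r s) Rel.
Proof.
apply: holds_ext => i Hi.
move: (allP Rel_atoms i Hi) => /andP [H1 H2].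
by rewrite /envOf ltnNge H1.
Qed.

Lemma chkTT : check FULL sTT Rel 14. Proof. by vm_compute. Qed.
Lemma chkTD : check FULL sTD Rel 14. Proof. by vm_compute. Qed.
Lemma chkB : check Urules sB Rel 14. Proof. by vm_compute. Qed.
Lemma chkF : done (nfd FULL 16 (finp, [::])). Proof. by vm_compute. Qed.

Definition Cr (x : Ugen -> A) r s := forall y, CommQ (x y) r /\ CommQ (x y) s.

Lemma full_holds x r s : Urel x -> Cr x r s -> holds q (envOf x r s) Rel ->
  holds q (envOf x r s) FULL.
Proof.
move=> HU HC HR; apply/holds_cat; split; first exact: Urules_holds.
by apply/holds_cat; split; first exact: Crules_holds.
Qed.

Arguments full_holds {x r s}.

Lemma stepTT x r s : Urel x -> Cr x r s -> holds q (envOf x r s) Rel ->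
  holds q (envOf x (ir_tau q x r) (ir_tau q x s)) Rel.
Proof.
move=> HU HC HR.
have := @check_sound KK A q q0 _ FULL sTT Rel 14 (full_holds HU HC HR) chkTT.
apply: holds_ext => i Hi.
move: (allP Rel_atoms i Hi) => /andP [H1 H2].
rewrite /sTT /envOf ltnNge H1 /=.
case: ifP => H8.
  apply: (T_bridge _ 4 x r) => //.
  by rewrite ltn_subLR.
rewrite H2; apply: (T_bridge _ 8 x s) => //.
by rewrite ltn_subLR // leqNgt H8.
Qed.

Lemma stepTD x r s : Urel x -> Cr x r s -> holds q (envOf x r s) Rel ->
  holds q (envOf x (ir_tau q x r) (ir_coprod q x s)) Rel.
Proof.
move=> HU HC HR.
have := @check_sound KK A q q0 _ FULL sTD Rel 14 (full_holds HU HC HR) chkTD.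
apply: holds_ext => i Hi.
move: (allP Rel_atoms i Hi) => /andP [H1 H2].
rewrite /sTD /envOf ltnNge H1 /=.
case: ifP => H8.
  apply: (T_bridge _ 4 x r) => //.
  by rewrite ltn_subLR.
rewrite H2; apply: (D_bridge _ 8 x s) => //.
by rewrite ltn_subLR // leqNgt H8.
Qed.

Lemma base x : Urel x -> holds q (envOf x (ir_embed q x) (ir_embed q x)) Rel.
Proof.
move=> HU.
have := @check_sound KK A q q0 _ Urules sB Rel 14
  (@Urules_holds x (ir_embed q x) (ir_embed q x) HU) chkB.
apply: holds_ext => i Hi.
move: (allP Rel_atoms i Hi) => /andP [H1 H2].
rewrite /sB /envOf ltnNge H1 /=.
case: ifP => H8.
  apply: E_bridge => //.
  by rewrite ltn_subLR.
rewrite H2; apply: E_bridge => //.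
by rewrite ltn_subLR // leqNgt H8.
Qed.

Lemma final x r s : Urel x -> Cr x r s -> holds q (envOf x r s) Rel ->
  vL (ir_coprod q x r) * vL (ir_coprod q x s) = vL (ir_coprod q x s) * vL (ir_coprod q x r).
Proof.
move=> HU HC HR.
have := @nf_zero KK A q q0 _ FULL 16 finp (full_holds HU HC HR) chkF.
rewrite /finp pval_cat pval_pneg !pval_pmul //.
rewrite (D_bridge _ 4 x r) // (D_bridge _ 8 x s) //.
by move/eqP; rewrite subr_eq0 => /eqP H; exact: H.
Qed.

End Concrete.

From mathcomp Require Import zify.

Arguments Rel_indep {KK q A} x1 x2 {r s}.
Arguments base {KK q A} q0 d0 {x}.
Arguments stepTT {KK q A} q0 d0 {x r s}.
Arguments stepTD {KK q A} q0 d0 {x r s}.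
Arguments final {KK q A} q0 d0 {x r s}.
Arguments Urel {KK} q {A} x.
Arguments envOf {KK} q {A} x r s i.
Arguments Cr {KK A} x r s.
Arguments CommQ {KK A} y r.
Arguments commrZ {KK A} y z k.

Section Main.
Variables (KK : fieldType) (q : KK) (n : nat) (A : algType KK) (g : nat -> Ugen -> A).
Hypothesis q0 : q != 0.
Hypothesis d0 : q - q^-1 != 0.
Hypothesis hg : Uq_tensor_rep q n g.

Lemma gcomm i j x y : (1 <= i <= n)%N -> (1 <= j <= n)%N -> i != j ->
  GRing.comm (g i x) (g j y).
Proof. by move=> Hi Hj Hij; exact: (hg.2 i j x y Hi Hj Hij). Qed.

Lemma gUrel i : (1 <= i <= n)%N -> Urel q (g i).
Proof. by move=> Hi; case: (hg.1 i Hi) => *; split. Qed.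

Lemma push_S S hi d : ir_push q g S hi d.+1 =
  if (hi - d.+1)%N \in S then ir_coprod q (g (hi - d.+1)%N) (ir_push q g S hi d)
  else ir_tau q (g (hi - d.+1)%N) (ir_push q g S hi d).
Proof. by []. Qed.

Ltac ctac c := repeat first [ apply: commrD | apply: commrB | apply: commrN | apply: commrM
  | apply: commrZ | apply: commr1 | apply: c | assumption ].

Lemma push_comm S hi : (hi <= n)%N -> forall d p y, (1 <= p)%N -> (p < hi - d)%N ->
  CommQ (g p y) (ir_push q g S hi d).
Proof.
move=> hn; elim=> [|d IH] p y hp hlt.
  have c : forall z, GRing.comm (g p y) (g hi z).
    move=> z; apply: gcomm; [lia | lia | apply/eqP; lia].
  by rewrite /=; split; rewrite /casimir; ctac c.
have c : forall z, GRing.comm (g p y) (g (hi - d.+1)%N z).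
  move=> z; apply: gcomm; [lia | lia | apply/eqP; lia].
have [c1 c2 c3 c4] := IH p y hp (leq_trans hlt (leq_sub2l _ (leqnSn d))).
by rewrite push_S; case: ifP => _; split; rewrite /=; ctac c.
Qed.

Lemma inv_push S1 S N : (2 <= N <= n)%N -> (forall p, (2 <= p < N)%N -> p \notin S1) ->
  forall d, (d <= N - 2)%N ->
  holds q (envOf q (g 0%N) (ir_push q g S1 N d) (ir_push q g S N d)) Rel.
Proof.
move=> HN HS1; elim=> [|d IH] Hd.
  apply: (Rel_indep (g N)); apply: (base q0 d0); apply: gUrel; lia.
have HR := IH (ltnW Hd).
rewrite !push_S (negbTE (HS1 _ _)); last by lia.
apply: (Rel_indep (g (N - d.+1)%N)).
have HU : Urel q (g (N - d.+1)%N) by apply: gUrel; lia.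
have HC : Cr (g (N - d.+1)%N) (ir_push q g S1 N d) (ir_push q g S N d).
  by move=> y; split; apply: push_comm; lia.
have HR' := Rel_indep _ (g (N - d.+1)%N) HR.
by case: ifP => _; [apply: (stepTD q0 d0) | apply: (stepTT q0 d0)].
Qed.

Lemma main_comm S1 S N : (2 <= N <= n)%N -> 1%N \in S1 -> 1%N \in S ->
  (forall p, (2 <= p < N)%N -> p \notin S1) ->
  vL (ir_push q g S1 N N.-1) * vL (ir_push q g S N N.-1)
  = vL (ir_push q g S N N.-1) * vL (ir_push q g S1 N N.-1).
Proof.
move=> HN H1 H1' HS1.
have -> : N.-1 = (N - 2).+1 by lia.
rewrite !push_S.
have -> : (N - (N - 2).+1)%N = 1%N by lia.
rewrite H1 H1'.
have HR := inv_push S1 S N HN HS1 (N - 2) (leqnn _).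
apply: (final q0 d0).
- by apply: gUrel; lia.
- by move=> y; split; apply: push_comm; lia.
- exact: Rel_indep _ _ HR.
Qed.

End Main.

Lemma last_iota_aux m k : last m (iota m.+1 k) = (m + k)%N.
Proof. by elim: k m => [|k IH] m /=; [rewrite addn0 | rewrite IH addSnnS]. Qed.

Theorem corollary4p12 (KK : fieldType) (q : KK) (hq0 : q != 0)
    (hq : forall m : nat, (0 < m)%N -> q ^+ m != 1)
    (k n : nat) (hk : (1 <= k)%N) (hn : (2 * k <= n)%N)
    (A : algType KK) (g : nat -> Ugen -> A) (hg : Uq_tensor_rep q n g) :
  LambdaA q g (set_1_2k k) * LambdaA q g (set_even k)
    = LambdaA q g (set_even k) * LambdaA q g (set_1_2k k)
  /\
  LambdaA q g (set_1_2k k) * LambdaA q g (set_odd k)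
    = LambdaA q g (set_odd k) * LambdaA q g (set_1_2k k).
Proof.
have d0 : q - q^-1 != 0.
  apply: contra (hq 2%N isT) => /eqP H; apply/eqP.
  have Hq : q = q^-1 by apply/eqP; rewrite -subr_eq0 H.
  by rewrite expr2 {1}Hq mulVf.
case: k hk hn => [|k] // _ hn.
have HN : (2 <= 2 * k.+1 <= n)%N by lia.
have HS1 : forall p, (2 <= p < 2 * k.+1)%N -> p \notin set_1_2k k.+1.
  move=> p Hp; rewrite /set_1_2k !inE; apply/norP; split; apply/eqP; lia.
have L1 : LambdaA q g (set_1_2k k.+1) =
    vL (ir_push q g (set_1_2k k.+1) (2 * k.+1) (2 * k.+1).-1).
  by rewrite /LambdaA /= subn1.
have L2 : LambdaA q g (set_even k.+1) =
    vL (ir_push q g (set_even k.+1) (2 * k.+1) (2 * k.+1).-1).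
  rewrite /LambdaA.
  have -> : last 0%N (set_even k.+1) = (2 * k.+1)%N.
    rewrite /set_even /=.
    rewrite (last_map (fun i => (2 * i)%N) (iota 2 k) 1) last_iota_aux; lia.
  by rewrite /= subn1.
have L3 : LambdaA q g (set_odd k.+1) =
    vL (ir_push q g (set_odd k.+1) (2 * k.+1) (2 * k.+1).-1).
  rewrite /LambdaA.
  have -> : last 0%N (set_odd k.+1) = (2 * k.+1)%N by rewrite /set_odd last_cat.
  by rewrite /= subn1.
rewrite L1 L2 L3; split; apply: (@main_comm KK q n A g hq0 d0 hg) => //.
Qed.
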